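(* Let $b_n = 3n^2+3n+1$ for $n \ge 0$ and $a_n = -(2n^4-n^3)$ for $n \ge 1$. Define sequences $\{A_n\}_{n\ge -1}$ and $\{B_n\}_{n\ge -1}$ by $A_{-1}=1$, $A_0=b_0$, $B_{-1}=0$, $B_0=1$, and for $n\ge 1$, $$A_n = b_n A_{n-1} + a_n A_{n-2},\qquad B_n = b_n B_{n-1} + a_n B_{n-2}.$$ Then $B_n \neq 0$ for all $n \ge 0$, and the generalized continued fraction $$b_0 + \cfrac{a_1}{b_1 + \cfrac{a_2}{b_2 + \cdots}} \;=\; 1 - \cfrac{2\cdot 1^4 - 1^3}{7 - \cfrac{2\cdot 2^4 - 2^3}{19 - \cfrac{2\cdot 3^4-3^3}{37 - \cdots}}}$$ converges to $\dfrac{8}{\pi^2}$, i.e. $\displaystyle\lim_{n\to\infty} \frac{A_n}{B_n} = \frac{8}{\pi^2}$.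
   Context: The value of a generalized continued fraction $b_0 + \cfrac{a_1}{b_1 + \cfrac{a_2}{b_2+\cdots}}$ is defined as the limit of its convergents $A_n/B_n$, where $A_n, B_n$ are the numerator and denominator sequences given by the recurrences above. Although placed in a conjecture environment, this identity is the paper's main result, which it proves. *)

(* Defs.v *)
From Stdlib Require Import Reals.
From Coquelicot Require Import Coquelicot.
Open Scope R_scope.

Definition cf_b (n : nat) : R := 3 * (INR n)^2 + 3 * INR n + 1.
Definition cf_a (n : nat) : R := - (2 * (INR n)^4 - (INR n)^3).

(* cf_pair x_m1 x_0 n = (X_{n-1}, X_n) for the recurrence
   X_n = b_n X_{n-1} + a_n X_{n-2} (n >= 1), with X_{-1} = x_m1, X_0 = x_0. *)
Fixpoint cf_pair (x_m1 x_0 : R) (n : nat) : R * R :=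
  match n with
  | O => (x_m1, x_0)
  | S k => let (p, q) := cf_pair x_m1 x_0 k in
           (q, cf_b (S k) * q + cf_a (S k) * p)
  end.

Definition cf_A (n : nat) : R := snd (cf_pair 1 (cf_b 0) n).
Definition cf_B (n : nat) : R := snd (cf_pair 0 1 n).

(* Main.v *)
Require Import Defs.
From Stdlib Require Import Reals Lra Lia.
From Coquelicot Require Import Coquelicot.
Open Scope R_scope.

Fixpoint mm (n : nat) : R := match n with O => 2 | S k => mm k * (2 * (INR k + 1)) / (2 * INR k + 1) end.
Fixpoint FF (n : nat) (x : R) : R := match n with O => 0
  | S k => FF k x + mm (S k) / (4 * (INR k + 1)^2) * sin x ^ (S (S (2*k))) end.
Fixpoint F1 (n : nat) (x : R) : R := match n with O => 0
  | S k => F1 k x + mm (S k) / (2 * (INR k + 1)) * (sin x ^ (S (2*k)) * cos x) end.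

Lemma INR_pos k : 0 <= INR k. Proof. apply pos_INR. Qed.

Lemma FF_der n x : is_derive (FF n) x (F1 n x).
Proof.
  induction n; cbn [FF F1].
  - apply (is_derive_const (K:=R_AbsRing) (V:=R_NormedModule) 0 x).
  - apply (is_derive_plus (K:=R_AbsRing) (V:=R_NormedModule)) with
      (f := FF n) (g := fun x => mm (S n) / (4 * (INR n + 1)^2) * sin x ^ (S (S (2*n)))); auto.
    replace (mm (S n) / (2 * (INR n + 1)) * (sin x ^ (S (2*n)) * cos x)) with
      (mm (S n) / (4 * (INR n + 1)^2) * (INR (S (S (2*n))) * cos x * sin x ^ (pred (S (S (2*n)))))).
    + apply is_derive_scal. apply is_derive_pow. apply is_derive_sin.
    + change (Init.Nat.pred (S (S (2*n)))) with (S (2*n)). rewrite !S_INR, mult_INR. simpl (INR 2). field.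
      pose proof (INR_pos n); lra.
Qed.

Lemma F1_der n x : is_derive (F1 n) x (2 - mm n * sin x ^ (2*n)).
Proof.
  induction n; simpl mm.
  - simpl. replace (2 - 2 * 1) with 0 by ring.
    apply (is_derive_const (K:=R_AbsRing) (V:=R_NormedModule) 0 x).
  - simpl F1.
    pose proof (INR_pos n).
    assert (Hd : is_derive (fun x => mm (S n) / (2 * (INR n + 1)) * (sin x ^ (S (2*n)) * cos x)) x
       (mm (S n) / (2 * (INR n + 1)) * ((INR (S (2*n)) * cos x * sin x ^ (pred (S (2*n)))) * cos x + sin x ^ (S (2*n)) * (- sin x)))).
    { apply is_derive_scal.
      apply (is_derive_mult (K:=R_AbsRing)) with (f := fun x => sin x ^ (S (2*n))) (g := cos).
      apply is_derive_pow. apply is_derive_sin. apply is_derive_cos. intros; apply Rmult_comm. }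
    pose proof (is_derive_plus (K:=R_AbsRing) (V:=R_NormedModule) _ _ _ _ _ IHn Hd) as H2.
    replace (2 - mm n * (2 * (INR n + 1)) / (2 * INR n + 1) * sin x ^ (2 * S n)) with
      (plus (2 - mm n * sin x ^ (2 * n))
      (mm n * (2 * (INR n + 1)) / (2 * INR n + 1) / (2 * (INR n + 1)) *
       (INR (S (2 * n)) * cos x * sin x ^ Init.Nat.pred (S (2 * n)) * cos x +
        sin x ^ S (2 * n) * - sin x))).
    + exact H2.
    + change (Init.Nat.pred (S (2*n))) with (2*n)%nat. rewrite S_INR, mult_INR. simpl (INR 2).
      replace (2 * S n)%nat with (S (S (2*n))) by lia.
      assert (Hc : cos x * cos x = 1 - sin x * sin x).
      { pose proof (sin2_cos2 x). unfold Rsqr in H0. lra. }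
      unfold plus; simpl.
      set (u := sin x ^ (n + (n + 0))) in *. set (s := sin x) in *. set (c := cos x) in *.
      assert (E: ((1+1)*INR n + 1) * c * u * c = ((1+1)*INR n+1) * u * (c*c)) by ring.
      rewrite E, Hc. field. lra.
Qed.

Lemma deriv_cont f df x : is_derive f x df -> continuity_pt f x.
Proof.
  intros H. apply continuity_pt_filterlim. apply (ex_derive_continuous (V:=R_NormedModule)). exists df; exact H.
Qed.

Lemma nonneg_first f df b : 0 <= b ->
  (forall x, is_derive f x (df x)) -> f 0 = 0 ->
  (forall x, 0 <= x <= b -> 0 <= df x) -> 0 <= f b.
Proof.
  intros Hb Hd H0 Hp.
  destruct (MVT_gen f 0 b df) as [c [Hc Heq]].
  - intros; apply Hd.
  - intros; eapply deriv_cont; apply Hd.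
  - rewrite Rmin_left in Hc by lra. rewrite Rmax_right in Hc by lra.
    rewrite H0 in Heq. assert (0 <= df c) by (apply Hp; lra).
    assert (f b = df c * b) by lra. rewrite H1. apply Rmult_le_pos; lra.
Qed.

Lemma nonneg_second f f1 f2 b : 0 <= b ->
  (forall x, is_derive f x (f1 x)) -> (forall x, is_derive f1 x (f2 x)) ->
  f 0 = 0 -> f1 0 = 0 ->
  (forall x, 0 <= x <= b -> 0 <= f2 x) -> 0 <= f b.
Proof.
  intros Hb Hd1 Hd2 H0 H1 Hp.
  apply nonneg_first with f1; auto.
  intros x Hx. apply nonneg_first with f2; auto; try lra.
  intros y Hy; apply Hp; lra.
Qed.
Lemma mm_pos n : 0 < mm n.
Proof. induction n; simpl. lra. pose proof (INR_pos n).
  apply Rdiv_lt_0_compat; [apply Rmult_lt_0_compat|]; lra. Qed.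

Lemma FF0 n : FF n 0 = 0.
Proof. induction n; cbn [FF]. reflexivity. rewrite IHn, sin_0. simpl. ring. Qed.
Lemma F10 n : F1 n 0 = 0.
Proof. induction n; cbn [F1]. reflexivity. rewrite IHn, sin_0. simpl. ring. Qed.

Lemma sinPI4_sq : sin (PI/4) ^ 2 = 1/2.
Proof. pose proof (sin2_cos2 (PI/4)). rewrite <- sin_cos_PI4 in H. unfold Rsqr in H. simpl. lra. Qed.

Lemma sin_sq_bound x : 0 <= x <= PI/4 -> 0 <= sin x ^ 2 <= 1/2.
Proof.
  intros Hx. pose proof PI_RGT_0.
  assert (0 <= sin x) by (apply sin_ge_0; lra).
  assert (sin x <= sin (PI/4)) by (apply sin_incr_1; lra).
  rewrite <- sinPI4_sq. split. apply pow_le; lra. apply pow_incr. lra.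
Qed.

Lemma sq_der x : is_derive (fun x => x ^ 2) x (2 * x).
Proof.
  replace (2 * x) with (INR 2 * 1 * x ^ (pred 2)) by (simpl; ring).
  apply is_derive_pow. apply (is_derive_id (K:=R_AbsRing)).
Qed.

Lemma lin_der k x : is_derive (fun x => k * x) x k.
Proof. pose proof (is_derive_scal (fun x => x) x k 1 (is_derive_id (K:=R_AbsRing) x)) as H.
  rewrite Rmult_1_r in H. exact H. Qed.

Lemma FF_bound n : 0 <= (PI/4)^2 - FF n (PI/4) <= mm n * (1/2)^n * (PI/4)^2/2.
Proof.
  pose proof PI_RGT_0. pose proof (mm_pos n).
  split.
  - apply (nonneg_second (fun x => x^2 - FF n x) (fun x => 2 * x - F1 n x)
       (fun x => mm n * sin x ^ (2*n))).
    + lra.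
    + intros x. apply (is_derive_minus (K:=R_AbsRing) (V:=R_NormedModule) (fun x => x^2) (FF n)).
      apply sq_der. apply FF_der.
    + intros x. replace (mm n * sin x ^ (2*n)) with (minus 2 (2 - mm n * sin x ^ (2 * n))).
      apply (is_derive_minus (K:=R_AbsRing) (V:=R_NormedModule) (fun x => 2 * x) (F1 n)).
      apply lin_der.
      apply F1_der. unfold minus, plus, opp; simpl. ring.
    + rewrite FF0. simpl; ring.
    + cbv beta. rewrite F10, Rmult_0_r. apply Rminus_0_r.
    + intros x Hx. rewrite pow_mult. apply Rmult_le_pos. lra. apply pow_le. apply sin_sq_bound; lra.
  - set (K := mm n * (1/2)^n).
    assert (0 <= K * (PI/4)^2/2 - ((PI/4)^2 - FF n (PI/4))); [|lra].
    apply (nonneg_second (fun x => K * x^2 / 2 - (x^2 - FF n x)) (fun x => K * x - (2 * x - F1 n x))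
       (fun x => K - mm n * sin x ^ (2*n))).
    + lra.
    + intros x. apply (is_derive_minus (K:=R_AbsRing) (V:=R_NormedModule) (fun x => K * x^2/2) (fun x => x^2 - FF n x)).
      replace (K * x) with (K/2 * (2 * x)) by field.
      eapply is_derive_ext; [|apply is_derive_scal, sq_der]. intros; simpl; field.
      apply (is_derive_minus (K:=R_AbsRing) (V:=R_NormedModule) (fun x => x^2) (FF n)).
      apply sq_der. apply FF_der.
    + intros x. replace (K - mm n * sin x ^ (2*n)) with (minus K (minus 2 (2 - mm n * sin x ^ (2 * n)))).
      apply (is_derive_minus (K:=R_AbsRing) (V:=R_NormedModule) (fun x => K * x) (fun x => 2 * x - F1 n x)).
      apply lin_der.
      apply (is_derive_minus (K:=R_AbsRing) (V:=R_NormedModule) (fun x => 2 * x) (F1 n)).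
      apply lin_der.
      apply F1_der. unfold minus, plus, opp; simpl. ring.
    + rewrite FF0. simpl; field.
    + cbv beta. rewrite F10, !Rmult_0_r, !Rminus_0_r. reflexivity.
    + intros x Hx. rewrite pow_mult. unfold K.
      assert ((sin x ^ 2) ^ n <= (1/2)^n) by (apply pow_incr; apply sin_sq_bound; lra).
      nra.
Qed.

Fixpoint PP (n : nat) : R := match n with O => 1 | S k => PP k * (INR k + 2) * (2 * INR k + 3) end.
Definition cc (k : nat) : R := mm (S k) / (2 * (INR k + 1)^2) * (1/2)^(S k).
Fixpoint SS (n : nat) : R := match n with O => cc 0 | S k => SS k + cc (S k) end.

Lemma cc_rec k : cc (S k) = cc k * (INR k + 1)^2 / ((INR k + 2) * (2 * INR k + 3)).
Proof.
  unfold cc. cbn [mm]. rewrite !S_INR. pose proof (INR_pos k).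
  cbn [pow]. field. lra.
Qed.

Lemma cc0 : cc 0 = 1.
Proof. unfold cc. simpl. field. Qed.

Lemma cc_pos k : 0 < cc k.
Proof. unfold cc. pose proof (mm_pos (S k)). pose proof (INR_pos k).
  apply Rmult_lt_0_compat. apply Rdiv_lt_0_compat. lra. nra. apply pow_lt; lra. Qed.

Lemma SS_pos n : 0 < SS n.
Proof. induction n; simpl. apply cc_pos. pose proof (cc_pos (S n)); lra. Qed.

Lemma PP_pos n : 0 < PP n.
Proof. induction n; simpl. lra. pose proof (INR_pos n).
  apply Rmult_lt_0_compat; [apply Rmult_lt_0_compat|]; lra. Qed.

Lemma sinPI4_pow k : sin (PI/4) ^ (S (S (2*k))) = (1/2)^(S k).
Proof. replace (S (S (2*k))) with (2 * S k)%nat by lia. rewrite pow_mult, sinPI4_sq. reflexivity. Qed.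

Lemma SS_FF n : SS n = 2 * FF (S n) (PI/4).
Proof.
  induction n.
  - cbn [SS FF]. rewrite sinPI4_pow. unfold cc. simpl. field.
  - cbn [SS]. change (FF (S (S n)) (PI/4)) with
      (FF (S n) (PI/4) + mm (S (S n)) / (4 * (INR (S n) + 1)^2) * sin (PI/4) ^ (S (S (2*(S n))))).
    rewrite IHn, sinPI4_pow. unfold cc. pose proof (INR_pos (S n)). field. lra.
Qed.

Lemma cf_pair_S x y k : cf_pair x y (S k) =
  (snd (cf_pair x y k), cf_b (S k) * snd (cf_pair x y k) + cf_a (S k) * fst (cf_pair x y k)).
Proof. simpl. destruct (cf_pair x y k); reflexivity. Qed.

Lemma A_pair n : cf_pair 1 1 (S n) = (PP n, PP (S n)).
Proof.
  induction n.
  - rewrite cf_pair_S. simpl. unfold cf_b, cf_a. simpl. f_equal. ring.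
  - rewrite cf_pair_S, IHn. simpl fst. simpl snd. f_equal.
    cbn [PP]. unfold cf_b, cf_a. rewrite !S_INR. ring.
Qed.

Lemma B_pair n : cf_pair 0 1 (S n) = (PP n * SS n, PP (S n) * SS (S n)).
Proof.
  induction n.
  - rewrite cf_pair_S. simpl. unfold cf_b, cf_a. rewrite cc_rec, cc0. simpl. f_equal. ring. field.
  - rewrite cf_pair_S, IHn. simpl fst. simpl snd. f_equal.
    cbn [PP SS]. rewrite (cc_rec (S n)). unfold cf_b, cf_a. rewrite !S_INR.
    pose proof (INR_pos n). field. lra.
Qed.

Lemma cfb0 : cf_b 0 = 1.
Proof. unfold cf_b. simpl. ring. Qed.

Lemma A_eq n : cf_A n = PP n.
Proof.
  unfold cf_A. rewrite cfb0. destruct n. reflexivity.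
  rewrite A_pair. reflexivity.
Qed.

Lemma B_eq n : cf_B n = PP n * SS n.
Proof.
  unfold cf_B. destruct n. simpl. rewrite cc0. ring.
  rewrite B_pair. reflexivity.
Qed.

Lemma tbound n : mm (S n) * (1/2)^(S n) <= 2 * (2/3)^n.
Proof.
  induction n.
  - simpl. lra.
  - pose proof (INR_pos n).
    assert (E : mm (S (S n)) * (1/2)^(S (S n)) = (mm (S n) * (1/2)^(S n)) * ((INR n + 2) / (2 * INR n + 3))).
    { cbn [mm]. rewrite S_INR. cbn [pow]. field. lra. }
    rewrite E. set (t := mm (S n) * (1/2)^(S n)) in *.
    assert (0 <= t) by (unfold t; pose proof (mm_pos (S n)); apply Rmult_le_pos; [lra| apply pow_le; lra]).
    assert ((INR n + 2) / (2 * INR n + 3) <= 2/3).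
    { apply (Rmult_le_reg_r (2 * INR n + 3)). lra. unfold Rdiv. rewrite Rmult_assoc, Rinv_l by lra. lra. }
    cbn [pow]. nra.
Qed.

Lemma FF_lim : is_lim_seq (fun n => FF (S n) (PI/4)) ((PI/4)^2).
Proof.
  apply is_lim_seq_le_le with (u := fun n => (PI/4)^2 - (PI/4)^2 * (2/3)^n) (w := fun n => (PI/4)^2).
  - intros n. pose proof (FF_bound (S n)). pose proof (tbound n). pose proof PI_RGT_0.
    assert (0 < (PI/4)^2) by (apply pow_lt; lra).
    split; [|lra].
    assert (mm (S n) * (1/2)^(S n) * (PI/4)^2/2 <= (PI/4)^2 * (2/3)^n); [|lra].
    assert (mm (S n) * (1/2)^(S n) * (PI/4)^2 <= 2 * (2/3)^n * (PI/4)^2) by (apply Rmult_le_compat_r; lra).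
    lra.
  - replace (Finite ((PI/4)^2)) with (Finite ((PI/4)^2 - (PI/4)^2 * 0)) by (f_equal; ring).
    apply is_lim_seq_minus'. apply is_lim_seq_const.
    apply is_lim_seq_mult'. apply is_lim_seq_const. apply is_lim_seq_geom.
    rewrite Rabs_pos_eq; lra.
  - apply is_lim_seq_const.
Qed.

Theorem mainTheorem1 :
  (forall n : nat, cf_B n <> 0) /\
  is_lim_seq (fun n : nat => cf_A n / cf_B n) (8 / PI ^ 2).
Proof.
  split.
  - intros n. rewrite B_eq. pose proof (PP_pos n). pose proof (SS_pos n). nra.
  - apply is_lim_seq_ext with (u := fun n => / SS n).
    { intros n. rewrite A_eq, B_eq. pose proof (PP_pos n). pose proof (SS_pos n). field. lra. }
    assert (H : is_lim_seq SS (2 * (PI/4)^2)).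
    { apply is_lim_seq_ext with (u := fun n => 2 * FF (S n) (PI/4)).
      intros; symmetry; apply SS_FF.
      apply is_lim_seq_mult'. apply is_lim_seq_const. apply FF_lim. }
    pose proof PI_RGT_0.
    pose proof (is_lim_seq_inv _ _ H) as H2.
    replace (Finite (8 / PI^2)) with (Rbar_inv (2 * (PI/4)^2)).
    apply H2. intro E. injection E. intro E'. assert (0 < (PI/4)^2) by (apply pow_lt; lra). lra.
    simpl. f_equal. field. lra.
Qed.
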